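(* Let $M$ be a closed, connected, oriented smooth $4m$-manifold and $\Phi\colon H^*(M;\mathbb R)\to\wedge^*\mathbb R^{4m}$ an injective homomorphism of graded algebras (cup product to exterior product) whose image is closed under the Euclidean Clifford product $\cdot$ of $\wedge^*\mathbb R^{4m}$. Let $\Lambda_{2m}=\Phi(H^{2m}(M;\mathbb R))$. Then $\Lambda_{2m}$ is closed under the Hodge star $*$ of $\wedge^{2m}\mathbb R^{4m}$, so $\Lambda_{2m}=\Lambda^+_{2m}\oplus\Lambda^-_{2m}$ with $\Lambda^\pm_{2m}$ the $\pm1$-eigenspaces of $*$ in $\Lambda_{2m}$; and the map $P\colon\wedge^{2m}\mathbb R^{4m}\times\wedge^{2m}\mathbb R^{4m}\to\wedge^{2m}\mathbb R^{4m}$, $P(v,v')=\langle v\cdot v'\rangle_{2m}$, satisfies $P(\Lambda^+_{2m}\times\Lambda^+_{2m})\subset\Lambda^+_{2m}$ and $P(\Lambda^-_{2m}\times\Lambda^-_{2m})\subset\Lambda^-_{2m}$.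
   Context: The Euclidean Clifford product on $\wedge^*\mathbb R^{N}$: the Clifford algebra of $(\mathbb R^N,\text{standard inner product})$ identified with $\wedge^*\mathbb R^N$ via $e_{i_1}\cdots e_{i_k}\leftrightarrow e_{i_1}\wedge\dots\wedge e_{i_k}$ ($i_1<\dots<i_k$), with $e_i\cdot e_i=1$ and $e_i\cdot e_j=-e_j\cdot e_i$ for $i\ne j$. $\langle\xi\rangle_k$ denotes the degree-$k$ component. *)

(* Defs.v *)
From HB Require Import structures.
From mathcomp Require Import all_boot all_order all_algebra.
From mathcomp Require Import reals.
Set Implicit Arguments. Unset Strict Implicit. Unset Printing Implicit Defensive.
Import Order.TTheory GRing.Theory Num.Theory.
Local Open Scope ring_scope.

(* The exterior algebra  /\^* R^N, as coefficient functions on the basis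
   e_S = e_{i_1} /\ ... /\ e_{i_k}, S = {i_1 < ... < i_k} a subset of 'I_N. *)
Notation Ext R N := {ffun {set 'I_N} -> R^o}.

Definition esign (R : realType) (N : nat) (S T : {set 'I_N}) : R :=
  (-1) ^+ #|[set p : 'I_N * 'I_N | [&& p.1 \in S, p.2 \in T & (p.2 < p.1)%N]]|.

Definition ext1 (R : realType) (N : nat) : Ext R N :=
  [ffun U : {set 'I_N} => (U == set0)%:R].

Definition wedge (R : realType) (N : nat) (x y : Ext R N) : Ext R N :=
  [ffun U : {set 'I_N} => \sum_(S : {set 'I_N}) \sum_(T : {set 'I_N})
      if (S :&: T == set0) && (S :|: T == U) then esign R S T * x S * y T else 0].

(* Euclidean Clifford product (e_i e_i = 1, e_i e_j = - e_j e_i):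
   e_S . e_T = esign S T e_{S symdiff T} *)
Definition clif (R : realType) (N : nat) (x y : Ext R N) : Ext R N :=
  [ffun U : {set 'I_N} => \sum_(S : {set 'I_N}) \sum_(T : {set 'I_N})
      if (S :\: T) :|: (T :\: S) == U then esign R S T * x S * y T else 0].

Definition grade (R : realType) (N : nat) (k : nat) (x : Ext R N) : Ext R N :=
  [ffun S : {set 'I_N} => if #|S| == k then x S else 0].

(* Hodge star for the standard inner product and orientation e_1/\.../\e_N:
   * e_S = esign S S^c e_{S^c}  (so that e_S /\ * e_S = e_1 /\ ... /\ e_N) *)
Definition hodge (R : realType) (N : nat) (x : Ext R N) : Ext R N :=
  [ffun U : {set 'I_N} => esign R (~: U) U * x (~: U)].

Definition Pprod (R : realType) (N : nat) (k : nat) (v w : Ext R N) : Ext R N :=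
  grade k (clif v w).

(* Lambda_k = Phi (H^k), where H^k is the range of the degree-k projection *)
Definition Lam (R : realType) (N : nat) (H : Type) (Phi : H -> Ext R N)
  (deg : nat -> H -> H) (k : nat) (v : Ext R N) : Prop :=
  exists h : H, v = Phi (deg k h).

(* Main.v *)
Require Import Defs.
From HB Require Import structures.
From mathcomp Require Import all_boot all_order all_algebra.
From mathcomp Require Import reals.
From mathcomp Require Import zify ring.
Import Order.TTheory GRing.Theory Num.Theory.
Local Open Scope ring_scope.
Set Implicit Arguments. Unset Strict Implicit.

Definition np N (A B : {set 'I_N}) : nat :=
  #|[set p : 'I_N * 'I_N | [&& p.1 \in A, p.2 \in B & (p.2 < p.1)%N]]|.

Lemma npE N (A B : {set 'I_N}) : np A B = (\sum_(i in A) \sum_(j in B) (j < i)%N)%N.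
Proof.
rewrite /np -sum1_card pair_big_dep /= big_mkcond [RHS]big_mkcond.
apply: eq_bigr => -[i j] _ /=; rewrite !inE /=.
by case: (i \in A); case: (j \in B); case: (j < i)%N.
Qed.

Lemma sumsU N (A B : {set 'I_N}) (F : 'I_N -> nat) : [disjoint A & B] ->
  (\sum_(i in A :|: B) F i = \sum_(i in A) F i + \sum_(i in B) F i)%N.
Proof. by move=> d; rewrite -bigU //; apply: eq_bigl => i; rewrite !inE. Qed.

Lemma npUl N (A B C : {set 'I_N}) : [disjoint A & B] ->
  np (A :|: B) C = (np A C + np B C)%N.
Proof. by move=> d; rewrite !npE sumsU. Qed.

Lemma npUr N (A B C : {set 'I_N}) : [disjoint B & C] ->
  np A (B :|: C) = (np A B + np A C)%N.
Proof. by move=> d; rewrite !npE -big_split /=; apply: eq_bigr => i _; rewrite sumsU. Qed.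

Lemma np_swap N (A B : {set 'I_N}) : [disjoint A & B] ->
  (np A B + np B A = #|A| * #|B|)%N.
Proof.
move=> d; rewrite !npE [X in (_ + X)%N]exchange_big -big_split /=.
rewrite -sum1_card big_distrl /=; apply: eq_bigr => i iA.
rewrite -big_split /= mul1n -sum1_card; apply: eq_bigr => j jB.
have : (val i != val j)%N by apply/eqP=> /val_inj eij; move/disjointFr: d => /(_ i iA); rewrite eij jB.
by case: (ltngtP (val i) (val j)); rewrite ?eqxx.
Qed.

Lemma np_diag N (A : {set 'I_N}) : (np A A * 2 + #|A| = #|A| * #|A|)%N.
Proof.
rewrite !npE muln2 -addnn {2}exchange_big -!big_split /=.
rewrite -sum1_card -big_split big_distrl /=; apply: eq_bigr => i iA.
rewrite mul1n -big_split /= (bigD1 i) //= [in RHS](bigD1 i) //= ltnn addn0 add0n addnC.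
congr (_ + _)%N; apply: eq_bigr => j /andP[jA] ji.
have : (val i != val j)%N by apply: contra ji => /eqP/val_inj ->.
by case: (ltngtP (val i) (val j)); rewrite ?eqxx.
Qed.

Lemma sign_eq (R : pzRingType) (a b y z : nat) : (a + 2 * y = b + 2 * z)%N ->
  (-1 : R) ^+ a = (-1) ^+ b.
Proof.
move=> h; rewrite -[LHS]signr_odd -[RHS]signr_odd.
by move: (congr1 odd h); rewrite !mul2n !oddD !odd_double !addbF => ->.
Qed.

Lemma cardsUd N (A B : {set 'I_N}) : [disjoint A & B] -> #|A :|: B| = (#|A| + #|B|)%N.
Proof. by move=> d; rewrite cardsU (disjoint_setI0 d) cards0 subn0. Qed.

Lemma esignE (R : realType) N (A B : {set 'I_N}) : esign R A B = (-1) ^+ np A B.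
Proof. by []. Qed.

Ltac setsolve S T := let i := fresh "i" in apply/setP => i; rewrite !inE; case: (i \in S); case: (i \in T).
Ltac disjsolve S T := rewrite -setI_eq0; apply/eqP; setsolve S T.

Lemma key (R : realType) (m : nat) (S T : {set 'I_(4 * m)}) :
  #|S| = (2 * m)%N -> #|T| = (2 * m)%N -> #|(S :\: T) :|: (T :\: S)| = (2 * m)%N ->
  esign R ((S :\: T) :|: (T :\: S)) (~: ((S :\: T) :|: (T :\: S))) * esign R S T
  = esign R (~: S) T * esign R S (~: S).
Proof.
move=> cS cT cU.
pose a := S :\: T; pose b := S :&: T; pose c := T :\: S; pose d := ~: (S :|: T).
have eU : (S :\: T) :|: (T :\: S) = a :|: c by [].
have eUc : ~: (a :|: c) = b :|: d by setsolve S T.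
have eSc : ~: S = c :|: d by setsolve S T.
have eS : S = a :|: b by setsolve S T.
have eT : T = b :|: c by setsolve S T.
have dab : [disjoint a & b] by disjsolve S T.
have dac : [disjoint a & c] by disjsolve S T.
have dad : [disjoint a & d] by disjsolve S T.
have dbc : [disjoint b & c] by disjsolve S T.
have dbd : [disjoint b & d] by disjsolve S T.
have dcd : [disjoint c & d] by disjsolve S T.
have dba : [disjoint b & a] by rewrite disjoint_sym.
have ddb : [disjoint d & b] by rewrite disjoint_sym.
have ddc : [disjoint d & c] by rewrite disjoint_sym.
have ca : (#|a| + #|b| = 2 * m)%N by rewrite -cardsUd // -eS.
have cb : (#|b| + #|c| = 2 * m)%N by rewrite -cardsUd // -eT.
have cc : (#|a| + #|c| = 2 * m)%N by rewrite -cardsUd // -eU.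
have cd : (#|c| + #|d| = 2 * m)%N.
  rewrite -cardsUd // -eSc; have := cardsC S; rewrite card_ord cS.
  lia.
have hb : #|b| = m by lia.
have hc : #|c| = m by lia.
have hd : #|d| = m by lia.
have s1 := np_swap dbd; have s2 := np_swap dcd.
have q1 := np_diag b; have q2 := np_diag c.
rewrite hb hd in s1; rewrite hc hd in s2; rewrite hb in q1; rewrite hc in q2.
rewrite eU eUc eSc eS eT !esignE -!exprD.
rewrite !npUl // !npUr //.
apply: (@sign_eq _ _ _ (m * m) (np a b + np c d)).
lia.
Qed.

Lemma key_vol (R : realType) (m : nat) (U : {set 'I_(4 * m)}) :
  #|~: U| = (2 * m)%N ->
  esign R (~: U) U = (-1) ^+ m * esign R (~: U) setT.
Proof.
move=> cU.
have eT : [set: 'I_(4 * m)] = ~: U :|: U by rewrite setUC setUCr.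
have dU : [disjoint ~: U & U] by rewrite -setI_eq0 setIC setICr.
have q := np_diag (~: U); rewrite cU in q.
rewrite eT !esignE npUr // -!exprD.
apply: (@sign_eq _ _ _ (m * m) 0).
nia.
Qed.

Lemma tst (R : realType) (x y e : R) : e * e = 1 -> e * (x * (e * y)) = x * y.
Proof. move=> h. have -> : e * (x * (e * y)) = (e * e) * (x * y) by ring. by rewrite h mul1r. Qed.

Definition Gr (R : realType) N k (v : Ext R N) := forall S : {set 'I_N}, #|S| != k -> v S = 0.

Lemma grade_Gr (R : realType) N k (x : Ext R N) : Gr k (grade k x).
Proof. by move=> S /negbTE h; rewrite ffunE h. Qed.

Lemma Gr_grade (R : realType) N k (x : Ext R N) : Gr k x -> grade k x = x.
Proof. by move=> h; apply/ffunP => S; rewrite ffunE; case: eqP => // /eqP /h ->. Qed.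

Lemma hodgeD (R : realType) N (x y : Ext R N) : hodge (x + y) = hodge x + hodge y.
Proof. by apply/ffunP => U; rewrite !ffunE mulrDr. Qed.

Lemma hodgeZ (R : realType) N (k : R) (x : Ext R N) : hodge (k *: x) = k *: hodge x.
Proof. by apply/ffunP => U; rewrite !ffunE /= mulrCA. Qed.

Lemma cardC4 m (U : {set 'I_(4 * m)}) : (#|~: U| == 2 * m)%N = (#|U| == 2 * m)%N.
Proof. have := cardsC U; rewrite card_ord => h; apply/eqP/eqP; lia. Qed.

Lemma hodge_invol (R : realType) m (v : Ext R (4 * m)) : Gr (2 * m) v -> hodge (hodge v) = v.
Proof.
move=> g; apply/ffunP => U; rewrite !ffunE setCK mulrA.
case: (boolP (#|U| == 2 * m)%N) => cU; last by rewrite (g U cU) mulr0.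
have dU : [disjoint ~: U & U] by rewrite -setI_eq0 setIC setICr.
have s := np_swap dU.
rewrite !esignE -exprD (@sign_eq _ _ 0 0 (m * m * 2)) ?expr0 ?mul1r //.
have := cardsC U; rewrite card_ord (eqP cU) => h.
have e2 : #|~: U| = (2 * m)%N by lia.
rewrite (eqP cU) e2 in s; nia.
Qed.

Lemma Gr_hodge (R : realType) m (v : Ext R (4 * m)) : Gr (2 * m) v -> Gr (2 * m) (hodge v).
Proof. by move=> g U cU; rewrite ffunE g ?mulr0 // cardC4. Qed.

Lemma symT N (S : {set 'I_N}) : (S :\: setT) :|: (setT :\: S) = ~: S.
Proof. by apply/setP => i; rewrite !inE; case: (i \in S). Qed.

Lemma clif_vol (R : realType) N (v z : Ext R N) : (forall T, T != setT -> z T = 0) ->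
  forall U, clif v z U = esign R (~: U) setT * v (~: U) * z setT.
Proof.
move=> hz U.
have inner : forall S, \sum_(T : {set 'I_N})
    (if (S :\: T) :|: (T :\: S) == U then esign R S T * v S * z T else 0) =
    if ~: S == U then esign R S setT * v S * z setT else 0.
  move=> S; rewrite (bigD1 setT) //= big1 ?addr0 ?symT // => T hT.
  by rewrite hz // mulr0 if_same.
rewrite ffunE; under eq_bigr do rewrite inner.
rewrite (bigD1 (~: U)) //= setCK eqxx big1 ?addr0 // => S hS.
by rewrite ifF //; apply: contraNF hS => /eqP <-; rewrite setCK.
Qed.

Lemma scaleRo (R : realType) (a b : R) : a *: (b : R^o) = a * b.
Proof. by []. Qed.

Lemma hodge_vol (R : realType) m (v z : Ext R (4 * m)) :
  (forall T, T != setT -> z T = 0) -> z setT != 0 -> Gr (2 * m) v ->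
  hodge v = ((-1) ^+ m / z setT) *: clif v z.
Proof.
move=> hz nz g; apply/ffunP => U; rewrite [LHS]ffunE [RHS]ffunE clif_vol // /=.
case: (boolP (#|~: U| == 2 * m)%N) => cU; last first.
  by rewrite (g _ cU) !(mulr0, mul0r) ?scaler0.
rewrite (key_vol _ (eqP cU)) scaleRo.
have -> : (-1) ^+ m / z setT * (esign R (~: U) setT * v (~: U) * z setT)
   = (-1) ^+ m * esign R (~: U) setT * v (~: U) * (z setT / z setT) by ring.
by rewrite divff // mulr1.
Qed.

Lemma hodge_P (R : realType) m (e : R) (v w : Ext R (4 * m)) :
  e * e = 1 -> Gr (2 * m) v -> Gr (2 * m) w -> hodge v = e *: v ->
  hodge (Pprod (2 * m) v w) = e *: Pprod (2 * m) v w.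
Proof.
move=> ee gv gw hv.
have vS : forall S, v S = e * (esign R (~: S) S * v (~: S)).
  move=> S; move/ffunP: hv => /(_ S); rewrite !ffunE scaleRo => ->.
  by rewrite mulrA ee mul1r.
apply/ffunP => U; rewrite /Pprod [LHS]ffunE [RHS]ffunE scaleRo !ffunE cardC4.
case: (boolP (#|U| == 2 * m)%N) => cU; last by rewrite !mulr0.
rewrite [X in _ = e * X](reindex_inj (@setC_inj _)) /=.
rewrite big_distrr [RHS]big_distrr; apply: eq_bigr => S _.
rewrite !big_distrr; apply: eq_bigr => T _ /=.
rewrite (vS (~: S)) setCK.
have ec : ((~: S :\: T) :|: (T :\: ~: S) == U) = ((S :\: T) :|: (T :\: S) == ~: U).
  rewrite (_ : (~: S :\: T) :|: (T :\: ~: S) = ~: ((S :\: T) :|: (T :\: S))); last first.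
    by setsolve S T.
  by apply/eqP/eqP => [<-|->]; rewrite setCK.
rewrite ec; case: eqP => [eU|_]; last by rewrite /= !mulr0.
case: (boolP (#|S| == 2 * m)%N) => [/eqP cS|/gv h]; last by rewrite h !(mulr0, mul0r).
case: (boolP (#|T| == 2 * m)%N) => [/eqP cT|/gw h]; last by rewrite h !(mulr0, mul0r).
have cV : #|(S :\: T) :|: (T :\: S)| = (2 * m)%N.
  by rewrite eU; have := cardsC U; rewrite card_ord (eqP cU); lia.
have K := key R cS cT cV.
rewrite -[U]setCK -eU.
rewrite setCK !mulrA K (mulrC e) -(mulrA _ e e) ee mulr1.
by rewrite -!mulrA.
Qed.
Theorem lemma7p5 (R : realType) (m : nat) (H : algType R)
  (* H = H^*(M;R), a graded algebra with degree projections deg k : H -> H^k *)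
  (deg : nat -> {linear H -> H})
  (deg_proj : forall (j k : nat) (x : H),
      deg j (deg k x) = if j == k then deg k x else 0)
  (deg_sum : forall x : H, x = \sum_(k < (4 * m).+1) deg k x)
  (deg_mul : forall (j k : nat) (x y : H),
      deg (j + k)%N (deg j x * deg k y) = deg j x * deg k y)
  (deg_comm : forall (j k : nat) (x y : H),
      deg j x * deg k y = ((-1) ^+ (j * k) : R) *: (deg k y * deg j x))
  (* M connected: H^0 = R *)
  (H0 : forall x : H, exists c : R, deg 0%N x = c *: 1)
  (* M closed, connected, oriented 4m-manifold: H^{4m} = R *)
  (Htop : exists mu : H, [/\ deg (4 * m)%N mu = mu, mu != 0 &
      forall x : H, exists c : R, deg (4 * m)%N x = c *: mu])
  (* Poincare duality: the cup-product pairing H^k x H^{4m-k} -> H^{4m} is nondegenerate *)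
  (PD : forall (k : nat) (x : H), (k <= 4 * m)%N -> deg k x != 0 ->
      exists y : H, deg k x * deg (4 * m - k)%N y != 0)
  (* Phi : injective homomorphism of graded algebras into /\^* R^{4m} *)
  (Phi : {linear H -> Ext R (4 * m)})
  (Phi_inj : injective Phi)
  (Phi1 : Phi 1 = ext1 R (4 * m))
  (PhiM : forall x y : H, Phi (x * y) = wedge (Phi x) (Phi y))
  (PhiG : forall (k : nat) (x : H), Phi (deg k x) = grade k (Phi x))
  (* image of Phi closed under the Euclidean Clifford product *)
  (Hcl : forall x y : H, exists z : H, Phi z = clif (Phi x) (Phi y)) :
  let L := Lam Phi (fun k => deg k) (2 * m) in
  [/\ (forall v, L v -> L (hodge v)),
      (forall v, L v -> exists vp vm, [/\ L vp, L vm, hodge vp = vp,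
                   hodge vm = - vm & v = vp + vm]),
      (forall v w, L v -> L w -> hodge v = v -> hodge w = w ->
         L (Pprod (2 * m) v w) /\ hodge (Pprod (2 * m) v w) = Pprod (2 * m) v w) &
      (forall v w, L v -> L w -> hodge v = - v -> hodge w = - w ->
         L (Pprod (2 * m) v w) /\ hodge (Pprod (2 * m) v w) = - Pprod (2 * m) v w)].
Proof.
move=> L.
have Lgr : forall v, L v -> Gr (2 * m) v.
  by move=> v [h ->]; rewrite PhiG; apply: grade_Gr.
have LD : forall v w, L v -> L w -> L (v + w).
  by move=> v w [h1 ->] [h2 ->]; exists (h1 + h2); rewrite !linearD.
have LZ : forall (k : R) v, L v -> L (k *: v).
  by move=> k v [h ->]; exists (k *: h); rewrite !linearZ.
have LP : forall v w, L v -> L w -> L (Pprod (2 * m) v w).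
  move=> v w [h1 ->] [h2 ->]; have [z hz] := Hcl (deg (2 * m)%N h1) (deg (2 * m)%N h2).
  by exists z; rewrite [RHS]PhiG hz.
have Lh : forall v, L v -> L (hodge v).
  move=> v Lv; have gv := Lgr v Lv; case: Lv => h vE.
  have [mu [dmu nmu _]] := Htop.
  have zs : forall T, T != setT -> Phi mu T = 0.
    move=> T hT; rewrite -dmu PhiG ffunE ifF //.
    apply: contraNF hT => /eqP cT.
    by rewrite eqEcard subsetT cardsT card_ord cT leqnn.
  have nz : Phi mu setT != 0.
    apply: contra nmu => /eqP z0; apply/eqP; apply: Phi_inj; rewrite linear0.
    apply/ffunP => T; rewrite ffunE; case: (eqVneq T setT) => [->|hT]; first by [].
    exact: zs.
  have [y hy] := Hcl (deg (2 * m)%N h) mu.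
  exists (((-1) ^+ m / Phi mu setT) *: y).
  rewrite PhiG linearZ /= hy -vE -hodge_vol //.
  by rewrite Gr_grade //; apply: Gr_hodge.
split.
- exact: Lh.
- move=> v Lv; have gv := Lgr v Lv.
  exists (2^-1 *: (v + hodge v)), (2^-1 *: (v + (-1) *: hodge v)); split.
  + by apply: (LZ); apply: (LD) => //; apply: (Lh).
  + by apply: (LZ); apply: (LD) => //; apply: (LZ); apply: (Lh).
  + by rewrite hodgeZ hodgeD hodge_invol // addrC.
  + rewrite hodgeZ hodgeD hodgeZ hodge_invol //.
    by apply/ffunP => U; rewrite !ffunE !scaleRo /=; ring.
  + by apply/ffunP => U; rewrite !ffunE !scaleRo /=; field.
- move=> v w Lv Lw hv hw; split; first exact: LP.
  by rewrite (@hodge_P R m 1) ?mulr1 ?scale1r //; apply: (Lgr).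
- move=> v w Lv Lw hv hw; split; first exact: LP.
  by rewrite (@hodge_P R m (-1)) ?mulrNN ?mulr1 ?scaleN1r //; apply: (Lgr).
Qed.
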